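(* Let $p,q>1$ be relatively prime integers, and let $G_p$ and $G_q$ be as follows: for $n>1$, $G_n=\langle K,s\rangle\le\overline{K}$, where $K=B\times\langle f\rangle$ with $\langle f\rangle$ infinite cyclic, $B=\langle a,b,c,t\mid [a,b]=[a,c]=[b,c]=1,\ t^{-1}at=ab,\ t^{-1}bt=bc,\ t^{-1}ct=c\rangle$, and $s$ is the unique $n$-th root of $bf$ in $\overline{K}$. Write the corresponding generators of $G_q$ as $\alpha,\beta,\gamma,\tau,\phi,\sigma$ (so $\sigma^q=\beta\phi$). Let $D=G_p\times G_q$ and $T=\langle f\phi^{-1}\rangle$. Then $T$ is an infinite cyclic direct factor of $D$, i.e. $D=S\times T$ for some subgroup $S$, and $S\cong D/T$ is directly indecomposable. Consequently $D$ has the two decompositions $D=G_p\times G_q=S\times T$ into directly indecomposable factors, where $G_p$ and $G_q$ are nonabelian and indecomposable while $T\cong\mathbb{Z}$.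
   Context: The rational closure $\overline{K}$ of a finitely generated torsion-free nilpotent group $K$ is the torsion-free nilpotent group containing $K$ in which every element has a unique $n$-th root for each $n\ge1$ and every element has a positive power in $K$. *)

(* Defs.v *)
From HB Require Import structures.
From mathcomp Require Import all_boot all_order all_algebra.
Set Implicit Arguments. Unset Strict Implicit. Unset Printing Implicit Defensive.
Import Order.TTheory GRing.Theory Num.Theory.
Local Open Scope ring_scope.

Section GroupNotions.
Variables (T : Type) (mul : T -> T -> T) (inv : T -> T) (one : T).

Definition is_subgroup (H : T -> Prop) : Prop :=
  H one /\ (forall x y, H x -> H y -> H (mul x y)) /\ (forall x, H x -> H (inv x)).

Definition gen (A : T -> Prop) : T -> Prop :=
  fun x => forall H, is_subgroup H -> (forall y, A y -> H y) -> H x.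

Definition gpow (x : T) (n : nat) : T := iter n (mul x) one.

Definition internal_direct (G A B : T -> Prop) : Prop :=
  is_subgroup A /\ is_subgroup B /\
  (forall x, A x -> G x) /\ (forall x, B x -> G x) /\
  (forall x, A x -> B x -> x = one) /\
  (forall x y, A x -> B y -> mul x y = mul y x) /\
  (forall g, G g -> exists x y, A x /\ B y /\ g = mul x y).

Definition trivial_set (H : T -> Prop) : Prop := forall x, H x -> x = one.

Definition indecomposable (G : T -> Prop) : Prop :=
  ~ trivial_set G /\
  forall A B, internal_direct G A B -> trivial_set A \/ trivial_set B.

Definition abelian_set (G : T -> Prop) : Prop :=
  forall x y, G x -> G y -> mul x y = mul y x.

End GroupNotions.

(* An element (x, va, vb, vc, e) stands for t^x a^va b^vb c^vc f^e,
   all exponents rational. *)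
Record elt := Elt { ex : rat; ea : rat; eb : rat; ec : rat; ef : rat }.

(* action of t^y on Q^3 = <a,b,c>_Q by conjugation w |-> t^-y w t^y :
   phi^y = I + y N + y(y-1)/2 N^2, with N a = b, N b = c, N c = 0 *)
Definition phia (y va : rat) := va.
Definition phib (y va vb : rat) := vb + y * va.
Definition phic (y va vb vc : rat) := vc + y * vb + (y * (y - 1) / 2%:R) * va.

Definition kmul (g h : elt) : elt :=
  Elt (ex g + ex h)
      (phia (ex h) (ea g) + ea h)
      (phib (ex h) (ea g) (eb g) + eb h)
      (phic (ex h) (ea g) (eb g) (ec g) + ec h)
      (ef g + ef h).

Definition kinv (g : elt) : elt :=
  Elt (- ex g)
      (- phia (- ex g) (ea g))
      (- phib (- ex g) (ea g) (eb g))
      (- phic (- ex g) (ea g) (eb g) (ec g))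
      (- ef g).

Definition kone : elt := Elt 0 0 0 0 0.

Definition ga : elt := Elt 0 1 0 0 0.
Definition gb : elt := Elt 0 0 1 0 0.
Definition gc : elt := Elt 0 0 0 1 0.
Definition gt : elt := Elt 1 0 0 0 0.
Definition gf : elt := Elt 0 0 0 0 1.

Definition Kgrp : elt -> Prop :=
  gen kmul kinv kone (fun x => x = ga \/ x = gb \/ x = gc \/ x = gt \/ x = gf).

(* G_n = <K, s> with s the (unique) n-th root of bf in Kbar *)
Definition Ggrp (n : nat) : elt -> Prop :=
  gen kmul kinv kone
    (fun x => Kgrp x \/ gpow kmul kone x n = kmul gb gf).

Definition dmul (g h : elt * elt) : elt * elt := (kmul g.1 h.1, kmul g.2 h.2).
Definition dinv (g : elt * elt) : elt * elt := (kinv g.1, kinv g.2).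
Definition done_ : elt * elt := (kone, kone).

Definition Dgrp (p q : nat) : elt * elt -> Prop :=
  fun d => Ggrp p d.1 /\ Ggrp q d.2.

Definition tgen : elt * elt := (gf, kinv gf).
Definition Tgrp : elt * elt -> Prop := gen dmul dinv done_ (fun d => d = tgen).

(* Main.v *)
Require Import Defs.
From mathcomp Require Import all_boot all_order all_algebra.
From HB Require Import structures.
From mathcomp Require Import ring lra.
From Stdlib Require Import Classical.
Set Implicit Arguments. Unset Strict Implicit. Unset Printing Implicit Defensive.
Import Order.TTheory GRing.Theory Num.Theory.

Set Default Proof Using "All".
Section Grp.
Variables (T : Type) (mul : T -> T -> T) (inv : T -> T) (one : T).
Hypotheses (mulA : forall x y z, mul x (mul y z) = mul (mul x y) z)
 (mul1g : forall x, mul one x = x) (mulg1 : forall x, mul x one = x)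
 (mulVg : forall x, mul (inv x) x = one) (mulgV : forall x, mul x (inv x) = one).

Definition zpow (x : T) (n : int) : T :=
  match n with Posz k => gpow mul one x k | Negz k => inv (gpow mul one x k.+1) end.
Definition comm (x y : T) : T := mul (mul (inv x) (inv y)) (mul x y).
Definition commutes (x y : T) := mul x y = mul y x.

Lemma gen_sub A : is_subgroup mul inv one (gen mul inv one A).
Proof.
split; first by move=> H [h1 _] _.
split; first by move=> x y hx hy H hH hA; case: (hH) => _ [hm _]; apply: hm; [apply: hx|apply: hy].
by move=> x hx H hH hA; case: (hH) => _ [_ hi]; apply: hi; apply: hx.
Qed.

Lemma gen_in (A : T -> Prop) y : A y -> gen mul inv one A y.
Proof. by move=> hy H _ hA; apply: hA. Qed.

Lemma gen_min (A H : T -> Prop) : is_subgroup mul inv one H -> (forall y, A y -> H y) ->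
  forall x, gen mul inv one A x -> H x.
Proof. by move=> hH hA x hx; apply: hx. Qed.

Lemma sub_gpow H x n : is_subgroup mul inv one H -> H x -> H (gpow mul one x n).
Proof.
move=> [h1 [hm hi]] hx; elim: n => [|n IH] //=.
by apply: hm.
Qed.

Lemma sub_zpow H x n : is_subgroup mul inv one H -> H x -> H (zpow x n).
Proof.
move=> hH hx; case: n => k /=; first exact: (sub_gpow k hH hx).
by case: (hH) => _ [_ hi]; apply: hi; apply: (sub_gpow k.+1 hH hx).
Qed.

Lemma sub_mul H x y : is_subgroup mul inv one H -> H x -> H y -> H (mul x y).
Proof. by move=> [_ [hm _]]; apply: hm. Qed.
Lemma sub_inv H x : is_subgroup mul inv one H -> H x -> H (inv x).
Proof. by move=> [_ [_ hi]]; apply: hi. Qed.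
Lemma sub_one H : is_subgroup mul inv one H -> H one.
Proof. by case. Qed.

Lemma sub_comm H x y : is_subgroup mul inv one H -> H x -> H y -> H (comm x y).
Proof.
move=> hH hx hy; rewrite /comm; apply: sub_mul => //; apply: sub_mul => //; exact: sub_inv.
Qed.

Lemma mulKg x y : mul (inv x) (mul x y) = y.
Proof. by rewrite mulA mulVg mul1g. Qed.
Lemma mulKVg x y : mul x (mul (inv x) y) = y.
Proof. by rewrite mulA mulgV mul1g. Qed.
Lemma mulgK x y : mul (mul y x) (inv x) = y.
Proof. by rewrite -mulA mulgV mulg1. Qed.
Lemma mulgKV x y : mul (mul y (inv x)) x = y.
Proof. by rewrite -mulA mulVg mulg1. Qed.

Lemma inv_uniq x y : mul x y = one -> y = inv x.
Proof. by move=> h; rewrite -(mulKg x y) h mulg1. Qed.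
Lemma invK x : inv (inv x) = x.
Proof. by apply/esym/inv_uniq. Qed.
Lemma invM x y : inv (mul x y) = mul (inv y) (inv x).
Proof.
apply/esym/inv_uniq; by rewrite -mulA (mulA y) mulgV mul1g mulgV.
Qed.
Lemma inv1 : inv one = one.
Proof. by apply/esym/inv_uniq; rewrite mulg1. Qed.

Lemma comm_invl x y : commutes x y -> commutes (inv x) y.
Proof.
rewrite /commutes => h.
by rewrite -{1}(mulKg x (mul y (inv x))) (mulA x y) h -mulA mulgV mulg1.
Qed.
Lemma commutes_sym x y : commutes x y -> commutes y x.
Proof. by []. Qed.
Lemma comm_invr x y : commutes x y -> commutes x (inv y).
Proof. by move=> h; apply: commutes_sym; apply: comm_invl. Qed.
Lemma comm_mull x y z : commutes x z -> commutes y z -> commutes (mul x y) z.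
Proof. by rewrite /commutes => h1 h2; rewrite -mulA h2 mulA h1 -mulA. Qed.
Lemma comm_mulr x y z : commutes x y -> commutes x z -> commutes x (mul y z).
Proof. by move=> h1 h2; apply: commutes_sym; apply: comm_mull. Qed.
Lemma comm_gpow x y n : commutes x y -> commutes x (gpow mul one y n).
Proof.
move=> h; elim: n => [|n IH] /=; first by rewrite /commutes mulg1 mul1g.
exact: comm_mulr.
Qed.

Lemma gpow_mulC x y n : commutes x y ->
  gpow mul one (mul x y) n = mul (gpow mul one x n) (gpow mul one y n).
Proof.
move=> h; elim: n => [|n IH] /=; first by rewrite mulg1.
by rewrite IH -mulA (mulA y) (comm_gpow n (commutes_sym h)) !mulA.
Qed.

Lemma commE a b : comm a b = mul (inv (mul b a)) (mul a b).
Proof. by rewrite /comm invM. Qed.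

Lemma commutes_comm y z x : commutes y z -> commutes y x -> commutes y (comm z x).
Proof.
move=> hz hx; rewrite /comm; apply: comm_mulr; apply: comm_mulr => //.
- exact: comm_invr.
- exact: comm_invr.
Qed.

Lemma comm_mulr_drop z x y : commutes y z -> commutes y x -> comm z (mul x y) = comm z x.
Proof.
move=> hz hx; rewrite commE.
have e1 : mul (mul x y) z = mul (mul x z) y by rewrite -mulA hz mulA.
have e2: mul z (mul x y) = mul (mul z x) y by rewrite mulA.
rewrite e1 e2 invM.
have hc := commutes_comm hz hx.
rewrite -mulA (mulA (inv (mul x z))) -commE.
by rewrite -hc mulKg.
Qed.

Lemma comm_mull_drop z x y : commutes x z -> comm z (mul x y) = comm z y.
Proof.
move=> hz; rewrite commE.
have e1 : mul z (mul x y) = mul x (mul z y) by rewrite mulA -hz -mulA.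
by rewrite e1 -(mulA x y z) invM -mulA mulKg -commE.
Qed.

Lemma comm_inv a b : inv (comm a b) = comm b a.
Proof. by rewrite /comm invM !invM !invK -!mulA. Qed.

Definition central (c : T) := forall g, commutes c g.

Lemma comm_central x y c d : central c -> central d -> comm (mul x c) (mul y d) = comm x y.
Proof.
move=> hc hd; rewrite comm_mulr_drop; last 2 first.
- exact: hd.
- exact: hd.
rewrite -comm_inv comm_mulr_drop ?comm_inv //; exact: hc.
Qed.

Lemma central_mul c d : central c -> central d -> central (mul c d).
Proof. move=> hc hd g; apply: comm_mull; [exact: hc|exact: hd]. Qed.
Lemma central_inv c : central c -> central (inv c).
Proof. move=> hc g; apply: comm_invl; exact: hc. Qed.

Lemma id_uniq G A B x1 y1 x2 y2 : internal_direct mul inv one G A B ->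
  A x1 -> B y1 -> A x2 -> B y2 -> mul x1 y1 = mul x2 y2 -> x1 = x2 /\ y1 = y2.
Proof.
move=> [hA [hB [_ [_ [hI _]]]]] a1 b1 a2 b2 e.
have e2 : mul (inv x2) x1 = mul y2 (inv y1).
  by rewrite -(mulgK y1 (mul (inv x2) x1)) -(mulA (inv x2) x1 y1) e mulKg.
have h1 : mul (inv x2) x1 = one.
  apply: hI; first by apply: sub_mul => //; exact: sub_inv.
  by rewrite e2; apply: sub_mul => //; exact: sub_inv.
have ex : x1 = x2 by rewrite -(mulKVg x2 x1) h1 mulg1.
by split=> //; move: e; rewrite ex => e; rewrite -(mulKg x2 y1) e mulKg.
Qed.

Lemma id_sym G A B : internal_direct mul inv one G A B -> internal_direct mul inv one G B A.
Proof.
move=> [hA [hB [hAG [hBG [hI [hC hD]]]]]].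
split; first done. split; first done. split; first done. split; first done.
split; first by move=> x hx hy; apply: hI.
split; first by move=> x y hx hy; rewrite (hC y x).
move=> g /hD [x [y [hx [hy ->]]]]; exists y, x; do 2 split => //; exact: hC.
Qed.

Lemma id_comm G A B z g : internal_direct mul inv one G A B -> A z -> G g -> A (comm z g).
Proof.
move=> hd hz hg; case: (hd) => hA [hB [_ [_ [_ [hC hD]]]]].
have [x [y [hx [hy ->]]]] := hD g hg.
rewrite comm_mulr_drop; first exact: sub_comm.
- by rewrite /commutes -hC.
- by rewrite /commutes -hC.
Qed.

End Grp.

Section Grp2.
Variables (T : Type) (mul : T -> T -> T) (inv : T -> T) (one : T).
Hypotheses (mulA : forall x y z, mul x (mul y z) = mul (mul x y) z)
 (mul1g : forall x, mul one x = x) (mulg1 : forall x, mul x one = x)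
 (mulVg : forall x, mul (inv x) x = one) (mulgV : forall x, mul x (inv x) = one).
Lemma comm_x1 x : comm mul inv x one = one.
Proof. have h1 : inv one = one by rewrite -{2}(mulVg one) mulg1.
by rewrite /comm h1 !mulg1 mulVg. Qed.
Lemma comm_1x x : comm mul inv one x = one.
Proof. have h1 : inv one = one by rewrite -{2}(mulVg one) mulg1.
by rewrite /comm h1 !mul1g mulVg. Qed.
End Grp2.

Unset Default Proof Using.

Local Open Scope ring_scope.

Lemma eltE (g : elt) : g = Elt (ex g) (ea g) (eb g) (ec g) (ef g).
Proof. by case: g. Qed.

Lemma elt_eq (g h : elt) : ex g = ex h -> ea g = ea h -> eb g = eb h -> ec g = ec h -> ef g = ef h -> g = h.
Proof. by case: g; case: h => /= ? ? ? ? ? ? ? ? ? ? -> -> -> -> ->. Qed.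

Ltac kcomp := apply: elt_eq; rewrite /= /phia /phib /phic /=; by field.

Lemma kmulA x y z : kmul x (kmul y z) = kmul (kmul x y) z.
Proof. kcomp. Qed.
Lemma kmul1g x : kmul kone x = x.
Proof. kcomp. Qed.
Lemma kmulg1 x : kmul x kone = x.
Proof. kcomp. Qed.
Lemma kmulVg x : kmul (kinv x) x = kone.
Proof. kcomp. Qed.
Lemma kmulgV x : kmul x (kinv x) = kone.
Proof. kcomp. Qed.

Definition ctr (c e : rat) := Elt 0 0 0 c e.
Definition Zc (g : elt) := ex g = 0 /\ ea g = 0 /\ eb g = 0.
Definition sroot (n : nat) := Elt 0 0 (n%:R^-1) 0 (n%:R^-1).

Lemma Zc_ctr g : Zc g -> g = ctr (ec g) (ef g).
Proof. case: g => X A B C E [h1 [h2 h3]]; simpl in *; by rewrite /ctr h1 h2 h3. Qed.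
Lemma Zc_ctrP c e : Zc (ctr c e).
Proof. by []. Qed.
Lemma ctr_central c e : central kmul (ctr c e).
Proof. move=> g; rewrite /commutes; kcomp. Qed.
Lemma Zc_central g : Zc g -> central kmul g.
Proof. by move/Zc_ctr->; apply: ctr_central. Qed.
Lemma ctr_mul c e c' e' : kmul (ctr c e) (ctr c' e') = ctr (c + c') (e + e').
Proof. kcomp. Qed.
Lemma ctr_inv c e : kinv (ctr c e) = ctr (- c) (- e).
Proof. kcomp. Qed.
Lemma ctr0 : ctr 0 0 = kone.
Proof. by []. Qed.
Lemma gpow_ex0 g n : ex g = 0 -> gpow kmul kone g n =
  Elt 0 (n%:R * ea g) (n%:R * eb g) (n%:R * ec g) (n%:R * ef g).
Proof.
case: g => X A B C E /= ->; elim: n => [|n IH] /=; first by kcomp.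
rewrite IH; kcomp.
Qed.
Lemma gpow_ctr c e n : gpow kmul kone (ctr c e) n = ctr (n%:R * c) (n%:R * e).
Proof. by rewrite gpow_ex0 //= !mulr0. Qed.
Lemma zpow_ctr c e (m : int) : zpow kmul kinv kone (ctr c e) m = ctr (m%:~R * c) (m%:~R * e).
Proof.
case: m => k; rewrite /zpow gpow_ctr //.
rewrite ctr_inv NegzE !mulrNz !mulNr.
by [].
Qed.
Lemma ex_mul g h : ex (kmul g h) = ex g + ex h. Proof. by []. Qed.
Lemma ea_mul g h : ea (kmul g h) = ea g + ea h. Proof. by []. Qed.
Lemma ef_mul g h : ef (kmul g h) = ef g + ef h. Proof. by []. Qed.
Lemma ex_inv g : ex (kinv g) = - ex g. Proof. by []. Qed.
Lemma ea_inv g : ea (kinv g) = - ea g. Proof. by []. Qed.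
Lemma ef_inv g : ef (kinv g) = - ef g. Proof. by []. Qed.
Lemma ef_gpow g n : ef (gpow kmul kone g n) = n%:R * ef g.
Proof. elim: n => [|n IH] /=; first by rewrite mul0r. by rewrite IH mulrS mulrDl mul1r. Qed.
Lemma ex_gpow g n : ex (gpow kmul kone g n) = n%:R * ex g.
Proof. elim: n => [|n IH] /=; first by rewrite mul0r. by rewrite IH mulrS mulrDl mul1r. Qed.

Lemma Zc_mul g h : Zc g -> Zc h -> Zc (kmul g h).
Proof. by move=> /Zc_ctr-> /Zc_ctr->; rewrite ctr_mul. Qed.
Lemma Zc_inv g : Zc g -> Zc (kinv g).
Proof. by move=> /Zc_ctr->; rewrite ctr_inv. Qed.

Notation kcomm := (comm kmul kinv).

Lemma commt0 z : ex z = 0 -> kcomm z gt = Elt 0 0 (ea z) (eb z) 0.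
Proof. case: z => X A B C E /= ->; rewrite /comm; kcomp. Qed.
Lemma comma z : let w := kcomm z ga in ex w = 0 /\ ea w = 0 /\ eb w = - ex z /\ ef w = 0.
Proof. case: z => X A B C E /=; rewrite /phia /phib /phic /=; split; [|split; [|split]]; by field. Qed.
Lemma comm_at : kcomm ga gt = gb.
Proof. rewrite /comm; kcomp. Qed.
Lemma comm_st n : (0 < n)%N -> kcomm (sroot n) gt = ctr (n%:R^-1) 0.
Proof.
move=> hn; rewrite /comm; apply: elt_eq; rewrite /= /phia /phib /phic /=; field.
all: by rewrite ?pnatr_eq0 -?lt0n.
Qed.

Notation "'KL' f" := (f _ _ _ _ kmulA kmul1g kmulg1 kmulVg kmulgV) (at level 10, f at level 8).

Notation isZ x := ((x : rat) \is a Num.int).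

Lemma isZ_nat_half (k : nat) : isZ (k%:R * (k%:R - 1) / 2%:R).
Proof.
elim: k => [|k IH]; first by rewrite mulr0n !mul0r; apply: int_num0.
have -> : k.+1%:R * (k.+1%:R - 1) / 2%:R = k%:R * (k%:R - 1) / 2%:R + k%:R :> rat.
  rewrite -addn1 natrD; by field.
by apply: rpredD => //; apply: natr_int.
Qed.

Lemma isZ_half y : isZ y -> isZ (y * (y - 1) / 2%:R).
Proof.
move/intrP=> [m ->]; case: m => k.
  by rewrite -pmulrn; exact: isZ_nat_half.
have -> : (Negz k)%:~R * ((Negz k)%:~R - 1) / 2%:R = k.+2%:R * (k.+2%:R - 1) / 2%:R :> rat.
  rewrite NegzE mulrNz -pmulrn -[k.+2]addn1 -addn1 !natrD; by field.
exact: isZ_nat_half.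
Qed.

Definition inG (n : nat) (g : elt) :=
  [/\ isZ (ex g), isZ (ea g), isZ (n%:R * ef g), isZ (eb g - ef g) & isZ (n%:R * ec g)].

Lemma inG_sub n : is_subgroup kmul kinv kone (inG n).
Proof.
split; first by split; rewrite /= ?mulr0 ?subr0; apply: int_num0.
split.
  move=> g h [g1 g2 g3 g4 g5] [h1 h2 h3 h4 h5]; split; rewrite /= /phia /phib /phic.
  - exact: rpredD.
  - exact: rpredD.
  - by rewrite mulrDr; apply: rpredD.
  - have -> : eb g + ex h * ea g + eb h - (ef g + ef h) = (eb g - ef g) + (eb h - ef h) + ex h * ea g by ring.
    by apply: rpredD; [apply: rpredD|apply: rpredM].
  - have -> : n%:R * (ec g + ex h * eb g + ex h * (ex h - 1) / 2%:R * ea g + ec h) =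
      n%:R * ec g + ex h * (n%:R * (eb g - ef g) + n%:R * ef g) + (ex h * (ex h - 1) / 2%:R) * ea g * n%:R + n%:R * ec h by field.
    apply: rpredD => //; apply: rpredD; last by apply: rpredM; [apply: rpredM; [exact: isZ_half|]|apply: natr_int].
    apply: rpredD => //; apply: rpredM => //; apply: rpredD => //; apply: rpredM => //; apply: natr_int.
move=> g [g1 g2 g3 g4 g5]; split; rewrite /= /phia /phib /phic.
- by rewrite rpredN.
- by rewrite rpredN.
- by rewrite mulrN rpredN.
- have -> : - (eb g + - ex g * ea g) - - ef g = - (eb g - ef g) + ex g * ea g by ring.
  by apply: rpredD; [rewrite rpredN|apply: rpredM].
- have -> : n%:R * - (ec g + - ex g * eb g + - ex g * (- ex g - 1) / 2%:R * ea g) =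
     - (n%:R * ec g) + ex g * (n%:R * (eb g - ef g) + n%:R * ef g) - ((- ex g) * (- ex g - 1) / 2%:R) * ea g * n%:R by field.
  apply: rpredB; last by apply: rpredM; [apply: rpredM; [apply: isZ_half; by rewrite rpredN|]|apply: natr_int].
  apply: rpredD; first by rewrite rpredN.
  apply: rpredM => //; apply: rpredD => //; apply: rpredM => //; apply: natr_int.
Qed.

Lemma nat_neq0 (n : nat) : (0 < n)%N -> n%:R != 0 :> rat.
Proof. by move=> hn; rewrite pnatr_eq0 -lt0n. Qed.

Lemma gpow_sroot n : (0 < n)%N -> gpow kmul kone (sroot n) n = kmul gb gf.
Proof.
move=> hn; rewrite gpow_ex0 //; apply: elt_eq; rewrite /= /phia /phib /phic /= ?mulr0 ?addr0 ?add0r //;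
  by rewrite mulfV ?nat_neq0.
Qed.

Lemma root_uniq n g : (0 < n)%N -> gpow kmul kone g n = kmul gb gf -> g = sroot n.
Proof.
move=> hn e.
have hx : ex g = 0.
  have := congr1 ex e; rewrite ex_gpow /= addr0 => /eqP; rewrite mulf_eq0 (negbTE (nat_neq0 hn)) /=.
  by move/eqP.
move: e; rewrite gpow_ex0 // => e.
have h1 := congr1 ea e; have h2 := congr1 eb e; have h3 := congr1 ec e; have h4 := congr1 ef e.
move: h1 h2 h3 h4; rewrite /= /phia /phib /phic /= ?mulr0 ?addr0 ?add0r => h1 h2 h3 h4.
have hn0 := nat_neq0 hn.
apply: elt_eq => //=.
- by move/eqP: h1; rewrite mulf_eq0 (negbTE hn0) => /eqP.
- by apply: (mulfI hn0); rewrite h2 mulfV.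
- by move/eqP: h3; rewrite mulf_eq0 (negbTE hn0) => /eqP.
- by apply: (mulfI hn0); rewrite h4 mulfV.
Qed.

Lemma sroot_inG n : (0 < n)%N -> inG n (sroot n).
Proof.
move=> hn; split; rewrite /= ?subrr ?mulr0; try apply: int_num0.
by rewrite mulfV ?nat_neq0 //; apply: int_num1.
Qed.

Lemma Kgrp_inG n x : Kgrp x -> inG n x.
Proof.
move: x; apply: (KL gen_min); first exact: inG_sub.
move=> y [->|[->|[->|[->|->]]]]; split; rewrite /= ?mulr0 ?mulr1 ?subrr ?subr0 ?sub0r ?rpredN;
  by [apply: int_num0 | apply: int_num1 | apply: natr_int].
Qed.

Lemma Ggrp_inG n x : (0 < n)%N -> Ggrp n x -> inG n x.
Proof.
move=> hn; move: x; apply: (KL gen_min); first exact: inG_sub.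
move=> y [/Kgrp_inG //|/(root_uniq hn) ->]; exact: sroot_inG.
Qed.

Lemma Ggrp_sub n : is_subgroup kmul kinv kone (Ggrp n).
Proof. exact: (KL gen_sub). Qed.
Lemma Kgrp_Ggrp n x : Kgrp x -> Ggrp n x.
Proof. by move=> h; apply: (KL gen_in); left. Qed.
Lemma Ggrp_ga n : Ggrp n ga. Proof. by apply: Kgrp_Ggrp; apply: (KL gen_in); left. Qed.
Lemma Ggrp_gb n : Ggrp n gb. Proof. by apply: Kgrp_Ggrp; apply: (KL gen_in); right; left. Qed.
Lemma Ggrp_gt n : Ggrp n gt. Proof. by apply: Kgrp_Ggrp; apply: (KL gen_in); do 3 right; left. Qed.
Lemma Ggrp_gf n : Ggrp n gf. Proof. by apply: Kgrp_Ggrp; apply: (KL gen_in); do 4 right. Qed.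
Lemma Ggrp_sroot n : (0 < n)%N -> Ggrp n (sroot n).
Proof. by move=> hn; apply: (KL gen_in); right; apply: gpow_sroot. Qed.

Lemma Ggrp_Zc n g : (0 < n)%N -> Ggrp n g -> Zc g -> isZ (ef g) /\ isZ (n%:R * ec g).
Proof.
move=> hn /(Ggrp_inG hn) [_ _ _ h4 h5] [_ [_ h3]]; split => //.
by move: h4; rewrite h3 sub0r rpredN.
Qed.

Lemma int_one_plus (n : nat) (k : int) : (1 < n)%N -> 1 + (n%:Z) * k <> 0.
Proof. move=> hn e; move: k e => [] m e.
- have : (1 + n * m)%N = 0%N by apply/eqP; rewrite -(eqz_nat); rewrite PoszD PoszM e.
  by [].
- rewrite NegzE mulrN in e.
  have : (n * m.+1)%N = 1%N.
    by apply/eqP; rewrite -eqz_nat PoszM; move/eqP: e; rewrite subr_eq0 eq_sym.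
  by move/eqP; rewrite muln_eq1 => /andP [/eqP hn1 _]; rewrite hn1 in hn.
Qed.

Lemma one_plus_ne0 (n : nat) (m : rat) : (1 < n)%N -> isZ m -> 1 + n%:R * m != 0.
Proof.
move=> hn /intrP [k ->]; apply/negP => /eqP e.
apply: (@int_one_plus n k hn); apply/eqP; rewrite -(intr_eq0 rat) rmorphD rmorphM /= rmorph1.
by rewrite -e.
Qed.

Lemma CC_line (A B : elt -> Prop) r r' :
  is_subgroup kmul kinv kone A -> is_subgroup kmul kinv kone B ->
  A (ctr r 0) -> B (ctr r' 0) -> r != 0 -> r' != 0 ->
  (forall x, A x -> B x -> x = kone) -> False.
Proof.
move=> hA hB ha hb hr hr' hI.
pose x := r / r'.
have e : zpow kmul kinv kone (ctr r 0) (denq x) = zpow kmul kinv kone (ctr r' 0) (numq x).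
  rewrite !zpow_ctr !mulr0 numqE /x; congr ctr.
  by rewrite [RHS]mulrAC divfK // mulrC.
have := hI _ ((KL sub_zpow) (denq x) hA ha); rewrite e => /(_ ((KL sub_zpow) (numq x) hB hb)).
rewrite -e zpow_ctr => /(congr1 ec) /= /eqP; rewrite mulf_eq0 (negbTE hr) orbF intr_eq0.
by rewrite (negbTE (denq_neq0 x)).
Qed.

Lemma Zc_dec g : Zc g \/ ~ Zc g.
Proof. exact: classic. Qed.

Lemma NC_gen (P : elt -> Prop) z : (forall w, P w -> P (kcomm w gt)) ->
  P (kcomm z ga) -> P (kcomm z gt) -> ~ Zc z -> exists r, r != 0 /\ P (ctr r 0).
Proof.
move=> hP h1 h2 hz.
have [hx|hx] := eqVneq (ex z) 0; last first.
  exists (- ex z); split; first by rewrite oppr_eq0.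
  have := hP _ h1; have [c1 [c2 [c3 c4]]] := comma z.
  by rewrite commt0 // c2 c3.
have [ha|ha] := eqVneq (ea z) 0; last first.
  exists (ea z); split => //.
  have := hP _ h2; rewrite commt0 // commt0 //= => h; exact h.
have [hb|hb] := eqVneq (eb z) 0; last first.
  by exists (eb z); split => //; move: h2; rewrite commt0 // ha.
by case: hz; split.
Qed.

Lemma isZ_int (x : rat) : isZ x -> exists k : int, x = k%:~R.
Proof. by move/intrP. Qed.

Lemma w1_eq n c e : (0 < n)%N ->
  kmul (gpow kmul kone (kmul (sroot n) (kinv (ctr c e))) n) (kinv gb) = ctr (n%:R * - c) (1 + n%:R * - e).
Proof.
move=> hn; rewrite ctr_inv gpow_ex0 //.
apply: elt_eq; rewrite /= /phia /phib /phic /=; field.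
all: by rewrite ?nat_neq0.
Qed.
Lemma key_G n A B : (1 < n)%N -> internal_direct kmul kinv kone (Ggrp n) A B ->
  (exists b0, B b0 /\ b0 <> kone) -> (exists z, A z /\ ~ Zc z) -> False.
Proof.
move=> hn1 hd [b0 [hb0 hb0n]] [z [hz hnz]].
have hn : (0 < n)%N by apply: ltnW.
have hn0 := nat_neq0 hn.
have hd' := (KL id_sym) hd.
case: (hd) => hA [hB [hAG [hBG [hI [hC hD]]]]].
have hclA : forall z g, A z -> Ggrp n g -> A (kcomm z g) by move=> ? ? ; exact: (KL id_comm) hd.
have hclB : forall z g, B z -> Ggrp n g -> B (kcomm z g) by move=> ? ? ; exact: (KL id_comm) hd'.
have [r [hr har]] := NC_gen (fun w hw => hclA w gt hw (@Ggrp_gt n)) (hclA z ga hz (@Ggrp_ga n))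
   (hclA z gt hz (@Ggrp_gt n)) hnz.
have hBZ : forall y, B y -> Zc y.
  move=> y hy; case: (Zc_dec y) => // hny; exfalso.
  have [r' [hr' hbr]] := NC_gen (fun w hw => hclB w gt hw (@Ggrp_gt n)) (hclB y ga hy (@Ggrp_ga n))
     (hclB y gt hy (@Ggrp_gt n)) hny.
  exact: (CC_line hA hB har hbr hr hr' hI).
have comp : forall g, Ggrp n g -> exists y, B y /\ A (kmul g (kinv y)).
  move=> g /hD [x [y [hx [hy ->]]]]; exists y; split => //.
  by rewrite (KL mulgK).
have [ya [hya hxa]] := comp _ (@Ggrp_ga n).
have [yt [hyt hxt]] := comp _ (@Ggrp_gt n).
have [ys [hys hxs]] := comp _ (Ggrp_sroot hn).
have cen : forall y, B y -> central kmul (kinv y).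
  by move=> y hy; apply: Zc_central; apply: Zc_inv; apply: hBZ.
have hAb : A gb.
  have h := (KL sub_comm) hA hxa hxt.
  rewrite (KL comm_central) in h; [|exact: cen hya|exact: cen hyt].
  by rewrite comm_at in h.
have hAc : A (ctr (n%:R^-1) 0).
  have h := (KL sub_comm) hA hxs hxt.
  rewrite (KL comm_central) in h; [|exact: cen hys|exact: cen hyt].
  by rewrite comm_st in h.
have hZs := hBZ _ hys.
have [hj hu1] := Ggrp_Zc hn (hBG _ hys) hZs.
have hAw1 : A (kmul (gpow kmul kone (kmul (sroot n) (kinv ys)) n) (kinv gb)).
  apply: (KL sub_mul) => //; last exact: (KL sub_inv).
  exact: (KL sub_gpow).
rewrite {1}(Zc_ctr hZs) w1_eq // in hAw1.
have hZb := hBZ _ hb0.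
have [he hu] := Ggrp_Zc hn (hBG _ hb0) hZb.
have hk1z : isZ (1 + n%:R * - ef ys).
  by apply: rpredD; [apply: int_num1|apply: rpredM; [apply: natr_int|rewrite rpredN]].
have hk1 : 1 + n%:R * - ef ys != 0 by apply: one_plus_ne0 => //; rewrite rpredN.
have [K1 eK1] := isZ_int hk1z.
have [E0 eE0] := isZ_int he.
have hX := (KL sub_zpow) K1 hB hb0.
rewrite {1}(Zc_ctr hZb) zpow_ctr in hX.
have hY := (KL sub_zpow) E0 hA hAw1.
rewrite zpow_ctr in hY.
have hMz : isZ (n%:R * (K1%:~R * ec b0 - E0%:~R * (n%:R * - ec ys))).
  have -> : n%:R * (K1%:~R * ec b0 - E0%:~R * (n%:R * - ec ys)) =
            K1%:~R * (n%:R * ec b0) + E0%:~R * n%:R * (n%:R * ec ys) by ring.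
  apply: rpredD; apply: rpredM => //; try apply: rpredM; by rewrite ?intr_int ?natr_int.
have [M eM] := isZ_int hMz.
have hCc := (KL sub_zpow) M hA hAc.
rewrite zpow_ctr in hCc.
have hXA : A (ctr (K1%:~R * ec b0) (K1%:~R * ef b0)).
  have -> : ctr (K1%:~R * ec b0) (K1%:~R * ef b0) =
     kmul (ctr (M%:~R * n%:R^-1) (M%:~R * 0)) (ctr (E0%:~R * (n%:R * - ec ys)) (E0%:~R * (1 + n%:R * - ef ys))).
    rewrite ctr_mul -eM -eK1 eE0; congr ctr; field; by rewrite ?nat_neq0.
  exact: (KL sub_mul).
have e0 := hI _ hXA hX.
have hK1 : K1%:~R != 0 :> rat by rewrite -eK1.
have ec0 := congr1 ec e0; have ef0 := congr1 ef e0.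
move: ec0 ef0 => /= /eqP; rewrite mulf_eq0 (negbTE hK1) /= => /eqP ec0 /eqP.
rewrite mulf_eq0 (negbTE hK1) /= => /eqP ef0.
by apply: hb0n; rewrite (Zc_ctr hZb) ec0 ef0.
Qed.

Lemma nontriv_ex (T : Type) (one : T) (A : T -> Prop) :
  ~ trivial_set one A -> exists x, A x /\ x <> one.
Proof.
move=> h; apply: NNPP => hn; apply: h => x hx; apply: NNPP => hne.
by apply: hn; exists x.
Qed.

Lemma indecomp_G n : (1 < n)%N -> indecomposable kmul kinv kone (Ggrp n).
Proof.
move=> hn1; split.
  by move=> h; have := congr1 ea (h _ (@Ggrp_ga n)) => /= /eqP; rewrite oner_eq0.
move=> A B hd.
case: (classic (trivial_set kone A)) => hA; first by left.
case: (classic (trivial_set kone B)) => hB; first by right.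
exfalso.
have [a0 ha0] := nontriv_ex hA; have [b0 hb0] := nontriv_ex hB.
case: (hd) => _ [_ [_ [_ [_ [_ hD]]]]].
have [x [y [hx [hy e]]]] := hD _ (@Ggrp_gt n).
have ex1 : ex x + ex y = 1 by rewrite -ex_mul -e.
have [h0|h0] := eqVneq (ex x) 0.
  apply: (key_G hn1 ((KL id_sym) hd)); first by exists a0.
  by exists y; split => // -[hy0 _]; move: ex1; rewrite h0 hy0 addr0 => /eqP; rewrite eq_sym oner_eq0.
apply: (key_G hn1 hd); first by exists b0.
by exists x; split => // -[hx0 _]; rewrite hx0 eqxx in h0.
Qed.

Lemma dmulA x y z : dmul x (dmul y z) = dmul (dmul x y) z.
Proof. by rewrite /dmul /= !kmulA. Qed.
Lemma dmul1g x : dmul done_ x = x.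
Proof. by case: x => a b; rewrite /dmul /= !kmul1g. Qed.
Lemma dmulg1 x : dmul x done_ = x.
Proof. by case: x => a b; rewrite /dmul /= !kmulg1. Qed.
Lemma dmulVg x : dmul (dinv x) x = done_.
Proof. by rewrite /dmul /= !kmulVg. Qed.
Lemma dmulgV x : dmul x (dinv x) = done_.
Proof. by rewrite /dmul /= !kmulgV. Qed.

Notation "'DL' f" := (f _ _ _ _ dmulA dmul1g dmulg1 dmulVg dmulgV) (at level 10, f at level 8).
Notation dcomm := (comm dmul dinv).

Lemma dcommE x y : dcomm x y = (kcomm x.1 y.1, kcomm x.2 y.2).
Proof. by []. Qed.
Lemma dgpowE x n : gpow dmul done_ x n = (gpow kmul kone x.1 n, gpow kmul kone x.2 n).
Proof. by elim: n => [|n IH] //=; rewrite IH. Qed.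
Lemma dzpowE x m : zpow dmul dinv done_ x m = (zpow kmul kinv kone x.1 m, zpow kmul kinv kone x.2 m).
Proof. by case: m => k /=; rewrite dgpowE. Qed.
Lemma dzpow_ctr c1 e1 c2 e2 m : zpow dmul dinv done_ (ctr c1 e1, ctr c2 e2) m =
  (ctr (m%:~R * c1) (m%:~R * e1), ctr (m%:~R * c2) (m%:~R * e2)).
Proof. by rewrite dzpowE /= !zpow_ctr. Qed.
Lemma dctr_mul c1 e1 c2 e2 c1' e1' c2' e2' :
  dmul (ctr c1 e1, ctr c2 e2) (ctr c1' e1', ctr c2' e2') = (ctr (c1 + c1') (e1 + e1'), ctr (c2 + c2') (e2 + e2')).
Proof. by rewrite /dmul /= !ctr_mul. Qed.
Lemma dctr_inv c1 e1 c2 e2 : dinv (ctr c1 e1, ctr c2 e2) = (ctr (- c1) (- e1), ctr (- c2) (- e2)).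
Proof. by rewrite /dinv /= !ctr_inv. Qed.
Lemma kone_ctr : kone = ctr 0 0. Proof. by []. Qed.
Lemma done_ctr : done_ = (ctr 0 0, ctr 0 0). Proof. by []. Qed.

Definition DZc (d : elt * elt) := Zc d.1 /\ Zc d.2.
Lemma DZc_ctr d : DZc d -> d = (ctr (ec d.1) (ef d.1), ctr (ec d.2) (ef d.2)).
Proof. case: d => a b [/= ha hb]; by rewrite {1}(Zc_ctr ha) {1}(Zc_ctr hb). Qed.
Lemma DZc_central d : DZc d -> central dmul d.
Proof.
move=> [h1 h2] g; rewrite /commutes /dmul; congr pair; [exact: (Zc_central h1 g.1) | exact: (Zc_central h2 g.2)].
Qed.

Lemma Dgrp_sub p q : is_subgroup dmul dinv done_ (Dgrp p q).
Proof.
split; first by split; apply: (KL sub_one); apply: Ggrp_sub.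
split.
  by move=> x y [hx1 hx2] [hy1 hy2]; split; [exact: (KL sub_mul) (Ggrp_sub p) hx1 hy1|exact: (KL sub_mul) (Ggrp_sub q) hx2 hy2].
by move=> x [hx1 hx2]; split; [exact: (KL sub_inv) (Ggrp_sub p) hx1|exact: (KL sub_inv) (Ggrp_sub q) hx2].
Qed.

Lemma tgen_ctr : tgen = (ctr 0 1, ctr 0 (-1)).
Proof. by rewrite /tgen /gf ctr_inv oppr0. Qed.

Lemma tgen_D p q : Dgrp p q tgen.
Proof.
split; first exact: Ggrp_gf.
exact: (KL sub_inv) (Ggrp_sub q) (@Ggrp_gf q).
Qed.

Definition Tset (d : elt * elt) := exists k : rat, isZ k /\ d = (ctr 0 k, ctr 0 (- k)).
Lemma Tset_sub : is_subgroup dmul dinv done_ Tset.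
Proof.
split; first by exists 0; rewrite oppr0; split => //; apply: int_num0.
split.
  move=> x y [k [hk ->]] [l [hl ->]]; exists (k + l); split; first exact: rpredD.
  by rewrite dctr_mul addr0 opprD.
move=> x [k [hk ->]]; exists (- k); split; first by rewrite rpredN.
by rewrite dctr_inv oppr0.
Qed.
Lemma Tgrp_Tset d : Tgrp d -> Tset d.
Proof.
move: d; apply: (DL gen_min); first exact: Tset_sub.
move=> y ->; exists 1; split; [apply: int_num1 | exact: tgen_ctr].
Qed.
Lemma Tgrp_DZc d : Tgrp d -> DZc d.
Proof. by move/Tgrp_Tset => [k [_ ->]]. Qed.
Lemma Tgrp_sub : is_subgroup dmul dinv done_ Tgrp.
Proof. exact: (DL gen_sub). Qed.
Lemma Tgrp_tgen : Tgrp tgen.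
Proof. by apply: (DL gen_in). Qed.
Lemma zpow_tgen m : zpow dmul dinv done_ tgen m = (ctr 0 m%:~R, ctr 0 (- m%:~R)).
Proof. by rewrite tgen_ctr dzpow_ctr !mulr0 mulr1 mulrN1. Qed.
Lemma Tgrp_D p q d : Tgrp d -> Dgrp p q d.
Proof.
move: d; apply: (DL gen_min); first exact: Dgrp_sub.
by move=> y ->; apply: tgen_D.
Qed.

Lemma gpow_tgen_ne n : (0 < n)%N -> gpow dmul done_ tgen n <> done_.
Proof.
move=> hn; rewrite dgpowE /= => /(congr1 (fun d => ef d.1)) /=.
rewrite ef_gpow /= mulr1 => /eqP; by rewrite (negbTE (nat_neq0 hn)).
Qed.

Lemma kinv1 : kinv kone = kone. Proof. by rewrite kone_ctr ctr_inv oppr0. Qed.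
Lemma kcomm_x1 x : kcomm x kone = kone. Proof. exact: (KL comm_x1). Qed.
Lemma kcomm_1x x : kcomm kone x = kone. Proof. exact: (KL comm_1x). Qed.

Lemma Dgrp_gt1 p q : Dgrp p q (gt, kone).
Proof. by split; [apply: Ggrp_gt | apply: (KL sub_one); apply: Ggrp_sub]. Qed.
Lemma Dgrp_ga1 p q : Dgrp p q (ga, kone).
Proof. by split; [apply: Ggrp_ga | apply: (KL sub_one); apply: Ggrp_sub]. Qed.
Lemma Dgrp_gs1 p q : (0 < p)%N -> Dgrp p q (sroot p, kone).
Proof. by split; [apply: Ggrp_sroot | apply: (KL sub_one); apply: Ggrp_sub]. Qed.
Lemma Dgrp_gt2 p q : Dgrp p q (kone, gt).
Proof. by split; [apply: (KL sub_one); apply: Ggrp_sub | apply: Ggrp_gt]. Qed.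
Lemma Dgrp_ga2 p q : Dgrp p q (kone, ga).
Proof. by split; [apply: (KL sub_one); apply: Ggrp_sub | apply: Ggrp_ga]. Qed.
Lemma Dgrp_gs2 p q : (0 < q)%N -> Dgrp p q (kone, sroot q).
Proof. by split; [apply: (KL sub_one); apply: Ggrp_sub | apply: Ggrp_sroot]. Qed.

Lemma line1_sub (F : elt * elt -> Prop) : is_subgroup dmul dinv done_ F ->
  is_subgroup kmul kinv kone (fun w => F (w, kone)).
Proof.
move=> [h1 [hm hi]]; split => //; split.
  by move=> x y hx hy; have := hm _ _ hx hy; rewrite /dmul /= kmul1g.
by move=> x hx; have := hi _ hx; rewrite /dinv /= kinv1.
Qed.
Lemma line2_sub (F : elt * elt -> Prop) : is_subgroup dmul dinv done_ F ->
  is_subgroup kmul kinv kone (fun w => F (kone, w)).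
Proof.
move=> [h1 [hm hi]]; split => //; split.
  by move=> x y hx hy; have := hm _ _ hx hy; rewrite /dmul /= kmul1g.
by move=> x hx; have := hi _ hx; rewrite /dinv /= kinv1.
Qed.

Lemma NC_D1 p q (F : elt * elt -> Prop) z :
  (forall z g, F z -> Dgrp p q g -> F (dcomm z g)) -> F z -> ~ Zc z.1 ->
  exists r, r != 0 /\ F (ctr r 0, kone).
Proof.
move=> hcl hz hn.
apply: (NC_gen (P := fun w => F (w, kone))) hn.
- move=> w hw; have := hcl _ _ hw (@Dgrp_gt1 p q); by rewrite dcommE /= kcomm_x1.
- by have := hcl _ _ hz (@Dgrp_ga1 p q); rewrite dcommE /= kcomm_x1.
- by have := hcl _ _ hz (@Dgrp_gt1 p q); rewrite dcommE /= kcomm_x1.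
Qed.
Lemma NC_D2 p q (F : elt * elt -> Prop) z :
  (forall z g, F z -> Dgrp p q g -> F (dcomm z g)) -> F z -> ~ Zc z.2 ->
  exists r, r != 0 /\ F (kone, ctr r 0).
Proof.
move=> hcl hz hn.
apply: (NC_gen (P := fun w => F (kone, w))) hn.
- move=> w hw; have := hcl _ _ hw (@Dgrp_gt2 p q); by rewrite dcommE /= kcomm_x1.
- by have := hcl _ _ hz (@Dgrp_ga2 p q); rewrite dcommE /= kcomm_x1.
- by have := hcl _ _ hz (@Dgrp_gt2 p q); rewrite dcommE /= kcomm_x1.
Qed.

Lemma CF1 g a r : g = dmul a r -> Zc r.1 -> Zc a.2 -> g.2 = kone -> DZc (dmul (dinv g) a).
Proof.
move=> -> h1 h2 /= e2; split => /=.
  by rewrite (KL invM) -kmulA kmulVg kmulg1; apply: Zc_inv.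
by rewrite e2 kinv1 kmul1g.
Qed.
Lemma CF2 g a r : g = dmul a r -> Zc r.2 -> Zc a.1 -> g.1 = kone -> DZc (dmul (dinv g) a).
Proof.
move=> -> h1 h2 /= e2; split => /=.
  by rewrite e2 kinv1 kmul1g.
by rewrite (KL invM) -kmulA kmulVg kmulg1; apply: Zc_inv.
Qed.
Lemma CF0 g a r : g = dmul a r -> DZc r -> DZc (dmul (dinv g) a).
Proof.
move=> -> [h1 h2]; split => /=.
  by rewrite (KL invM) -kmulA kmulVg kmulg1; apply: Zc_inv.
by rewrite (KL invM) -kmulA kmulVg kmulg1; apply: Zc_inv.
Qed.

Lemma sroot_ctr n c e : kmul (sroot n) (ctr c e) = Elt 0 0 (n%:R^-1) c (n%:R^-1 + e).
Proof. apply: elt_eq; rewrite /= /phia /phib /phic /=; ring. Qed.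

Lemma W1 n c1 e1 c2 e2 : (0 < n)%N ->
  dmul (gpow dmul done_ (dmul (sroot n, kone) (ctr c1 e1, ctr c2 e2)) n) (dinv (gb, kone)) =
  (ctr (n%:R * c1) (1 + n%:R * e1), ctr (n%:R * c2) (n%:R * e2)).
Proof.
move=> hn; rewrite dgpowE /dmul /dinv /= sroot_ctr kmul1g gpow_ctr gpow_ex0 // kinv1 kmulg1.
congr pair; apply: elt_eq; rewrite /= /phia /phib /phic /=; field; by rewrite ?nat_neq0.
Qed.
Lemma W2 n c1 e1 c2 e2 : (0 < n)%N ->
  dmul (gpow dmul done_ (dmul (kone, sroot n) (ctr c1 e1, ctr c2 e2)) n) (dinv (kone, gb)) =
  (ctr (n%:R * c1) (n%:R * e1), ctr (n%:R * c2) (1 + n%:R * e2)).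
Proof.
move=> hn; rewrite dgpowE /dmul /dinv /= sroot_ctr kmul1g gpow_ctr gpow_ex0 // kinv1 kmulg1.
congr pair; apply: elt_eq; rewrite /= /phia /phib /phic /=; field; by rewrite ?nat_neq0.
Qed.

Ltac zt := repeat (first [assumption | apply: int_num1 | apply: natr_int | apply: intr_int |
   apply: rpredD | apply: rpredB | apply: rpredM | rewrite rpredN]).

Section KeyD.
Variables (p q : nat) (S A B : elt * elt -> Prop).
Hypotheses (hp : (1 < p)%N) (hq : (1 < q)%N)
  (hS : internal_direct dmul dinv done_ (Dgrp p q) S Tgrp)
  (hAB : internal_direct dmul dinv done_ S A B).

Let hp0 : (0 < p)%N. Proof. exact: ltnW. Qed.
Let hq0 : (0 < q)%N. Proof. exact: ltnW. Qed.

Let hA : is_subgroup dmul dinv done_ A. Proof. by case: hAB. Qed.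
Let hB : is_subgroup dmul dinv done_ B. Proof. by case: hAB => _ []. Qed.
Let hSs : is_subgroup dmul dinv done_ S. Proof. by case: hS. Qed.
Let AS x : A x -> S x. Proof. by case: hAB => _ [_ [h _]]; apply: h. Qed.
Let BS x : B x -> S x. Proof. by case: hAB => _ [_ [_ [h _]]]; apply: h. Qed.
Let SD x : S x -> Dgrp p q x. Proof. by case: hS => _ [_ [h _]]; apply: h. Qed.
Let AD x : A x -> Dgrp p q x. Proof. by move=> /AS /SD. Qed.
Let BD x : B x -> Dgrp p q x. Proof. by move=> /BS /SD. Qed.
Let comAB x y : A x -> B y -> dmul x y = dmul y x.
Proof. by case: hAB => _ [_ [_ [_ [_ [h _]]]]]; apply: h. Qed.
Let comST x y : S x -> Tgrp y -> dmul x y = dmul y x.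
Proof. by case: hS => _ [_ [_ [_ [_ [h _]]]]]; apply: h. Qed.
Let IAB x : A x -> B x -> x = done_.
Proof. by case: hAB => _ [_ [_ [_ [h _]]]]; apply: h. Qed.

Lemma decompD g : Dgrp p q g -> exists a b t, [/\ A a, B b, Tgrp t & g = dmul (dmul a b) t].
Proof.
case: hS => _ [_ [_ [_ [_ [_ hD]]]]] /hD [s [t [hs [ht ->]]]].
case: hAB => _ [_ [_ [_ [_ [_ hD']]]]]; have [a [b [ha [hb ->]]]] := hD' _ hs.
by exists a, b, t.
Qed.

Lemma uniq3 a1 b1 t1 a2 b2 t2 : A a1 -> B b1 -> Tgrp t1 -> A a2 -> B b2 -> Tgrp t2 ->
  dmul (dmul a1 b1) t1 = dmul (dmul a2 b2) t2 -> [/\ a1 = a2, b1 = b2 & t1 = t2].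
Proof.
move=> ha1 hb1 ht1 ha2 hb2 ht2 e.
have hs1 : S (dmul a1 b1) by exact: ((DL sub_mul) hSs (AS ha1) (BS hb1)).
have hs2 : S (dmul a2 b2) by exact: ((DL sub_mul) hSs (AS ha2) (BS hb2)).
have [e1 e2] := (DL id_uniq) hS hs1 ht1 hs2 ht2 e.
have [e3 e4] := (DL id_uniq) hAB ha1 hb1 ha2 hb2 e1.
by split.
Qed.

Lemma clA z g : A z -> Dgrp p q g -> A (dcomm z g).
Proof.
move=> hz /decompD [a [b [t [ha hb ht ->]]]].
have hab : S (dmul a b) by exact: ((DL sub_mul) hSs (AS ha) (BS hb)).
rewrite ((DL comm_mulr_drop) (esym (comST (AS hz) ht)) (esym (comST hab ht))).
rewrite ((DL comm_mulr_drop) (esym (comAB hz hb)) (esym (comAB ha hb))).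
exact: (DL sub_comm) hA hz ha.
Qed.

Lemma clB z g : B z -> Dgrp p q g -> B (dcomm z g).
Proof.
move=> hz /decompD [a [b [t [ha hb ht ->]]]].
have hab : S (dmul a b) by exact: ((DL sub_mul) hSs (AS ha) (BS hb)).
rewrite ((DL comm_mulr_drop) (esym (comST (BS hz) ht)) (esym (comST hab ht))).
rewrite ((DL comm_mull_drop) b (comAB ha hz)).
exact: (DL sub_comm) hB hz hb.
Qed.

Lemma CC_D1 r r' : A (ctr r 0, kone) -> B (ctr r' 0, kone) -> r != 0 -> r' != 0 -> False.
Proof.
move=> ha hb hr hr'.
apply: (CC_line (line1_sub hA) (line1_sub hB) ha hb hr hr').
by move=> x h1 h2; have := IAB h1 h2 => /(congr1 fst).
Qed.
Lemma CC_D2 r r' : A (kone, ctr r 0) -> B (kone, ctr r' 0) -> r != 0 -> r' != 0 -> False.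
Proof.
move=> ha hb hr hr'.
apply: (CC_line (line2_sub hA) (line2_sub hB) ha hb hr hr').
by move=> x h1 h2; have := IAB h1 h2 => /(congr1 snd).
Qed.

Lemma dcomm_central x y c d : DZc c -> DZc d -> dcomm (dmul x c) (dmul y d) = dcomm x y.
Proof. move=> hc hd; apply: (DL comm_central); exact: DZc_central. Qed.

Lemma Dgrp_Zc1 d : Dgrp p q d -> Zc d.1 -> isZ (ef d.1) /\ isZ (p%:R * ec d.1).
Proof. by move=> [h1 _]; apply: Ggrp_Zc. Qed.
Lemma Dgrp_Zc2 d : Dgrp p q d -> Zc d.2 -> isZ (ef d.2) /\ isZ (q%:R * ec d.2).
Proof. by move=> [_ h2]; apply: Ggrp_Zc. Qed.

Lemma Dgrp_inv d : Dgrp p q d -> Dgrp p q (dinv d).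
Proof. exact: (DL sub_inv) (Dgrp_sub p q). Qed.
Lemma Dgrp_mul d e : Dgrp p q d -> Dgrp p q e -> Dgrp p q (dmul d e).
Proof. exact: (DL sub_mul) (Dgrp_sub p q). Qed.

Lemma case2 : (forall y, B y -> Zc y.1) -> (forall y, A y -> Zc y.2) -> False.
Proof.
move=> hB1 hA2.
have compA : forall g, Dgrp p q g -> g.2 = kone -> exists z, [/\ DZc z, Dgrp p q z & A (dmul g z)].
  move=> g hg hg2; have [a [b [t [ha hb ht eg]]]] := decompD hg.
  exists (dmul (dinv g) a); split.
  - apply: (CF1 (r := dmul b t)) => //; first by rewrite eg dmulA.
      by apply: Zc_mul; [exact: hB1 | exact: (Tgrp_DZc ht).1].
    exact: hA2.
  - by apply: Dgrp_mul; [exact: Dgrp_inv | exact: AD].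
  - by rewrite (DL mulKVg).
have compB : forall g, Dgrp p q g -> g.1 = kone -> exists z, [/\ DZc z, Dgrp p q z & B (dmul g z)].
  move=> g hg hg1; have [a [b [t [ha hb ht eg]]]] := decompD hg.
  exists (dmul (dinv g) b); split.
  - apply: (CF2 (r := dmul a t)) => //; first by rewrite eg (comAB ha hb) dmulA.
      by apply: Zc_mul; [exact: hA2 | exact: (Tgrp_DZc ht).2].
    exact: hB1.
  - by apply: Dgrp_mul; [exact: Dgrp_inv | exact: BD].
  - by rewrite (DL mulKVg).
have [za [hza hzaD hAa]] := compA _ (@Dgrp_ga1 p q) erefl.
have [zt [hzt hztD hAt]] := compA _ (@Dgrp_gt1 p q) erefl.
have [zs [hzs hzsD hAs]] := compA _ (Dgrp_gs1 q hp0) erefl.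
have [ya [hya hyaD hBa]] := compB _ (@Dgrp_ga2 p q) erefl.
have [yt [hyt hytD hBt]] := compB _ (@Dgrp_gt2 p q) erefl.
have [ys [hys hysD hBs]] := compB _ (Dgrp_gs2 p hq0) erefl.
have hAb : A (gb, kone).
  have := (DL sub_comm) hA hAa hAt.
  by rewrite dcomm_central // dcommE /= comm_at kcomm_x1.
have hAc : A (ctr (p%:R^-1) 0, kone).
  have := (DL sub_comm) hA hAs hAt.
  by rewrite dcomm_central // dcommE /= (comm_st hp0) kcomm_x1.
have hBb : B (kone, gb).
  have := (DL sub_comm) hB hBa hBt.
  by rewrite dcomm_central // dcommE /= comm_at kcomm_x1.
have hBc : B (kone, ctr (q%:R^-1) 0).
  have := (DL sub_comm) hB hBs hBt.
  by rewrite dcomm_central // dcommE /= (comm_st hq0) kcomm_x1.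
have hw1 : A (dmul (gpow dmul done_ (dmul (sroot p, kone) zs) p) (dinv (gb, kone))).
  by apply: (DL sub_mul) hA _ _; [exact: (DL sub_gpow) | exact: (DL sub_inv)].
have hw2 : B (dmul (gpow dmul done_ (dmul (kone, sroot q) ys) q) (dinv (kone, gb))).
  by apply: (DL sub_mul) hB _ _; [exact: (DL sub_gpow) | exact: (DL sub_inv)].
rewrite (DZc_ctr hzs) W1 // in hw1.
rewrite (DZc_ctr hys) W2 // in hw2.
have [hk1 hu1] := Dgrp_Zc1 hzsD hzs.1.
have [hk2 hu2] := Dgrp_Zc2 hzsD hzs.2.
have [hk3 hu3] := Dgrp_Zc1 hysD hys.1.
have [hk4 hu4] := Dgrp_Zc2 hysD hys.2.
move: hw1 hw2 hk1 hu1 hk2 hu2 hk3 hu3 hk4 hu4.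
move: (ec zs.1) (ef zs.1) (ec zs.2) (ef zs.2) (ec ys.1) (ef ys.1) (ec ys.2) (ef ys.2) => u1 k1 u2 k2 u3 k3 u4 k4.
move=> hw1 hw2 hk1 hu1 hk2 hu2 hk3 hu3 hk4 hu4.
have [L eL] := isZ_int (x := - (1 + q%:R * (k3 + k4))) ltac:(zt).
have [M eM] := isZ_int (x := 1 + p%:R * (k1 + k2)) ltac:(zt).
have [N eN] := isZ_int (x := (1 + p%:R * k1) * (1 + q%:R * k4) - (p%:R * k2) * (q%:R * k3)) ltac:(zt).
have [P1 eP1] := isZ_int (x := L%:~R * p%:R * (p%:R * u1) + M%:~R * q%:R * (p%:R * u3)) ltac:(zt).
have [P2 eP2] := isZ_int (x := L%:~R * p%:R * (q%:R * u2) + M%:~R * q%:R * (q%:R * u4)) ltac:(zt).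
have hX := (DL sub_zpow) L hA hw1.
have hY := (DL sub_zpow) M hB hw2.
have hZ := (DL sub_zpow) N Tgrp_sub Tgrp_tgen.
have hCA := (DL sub_zpow) P1 hA hAc.
have hCB := (DL sub_zpow) P2 hB hBc.
rewrite kone_ctr dzpow_ctr in hCA.
rewrite kone_ctr dzpow_ctr in hCB.
rewrite dzpow_ctr in hX.
rewrite dzpow_ctr in hY.
rewrite zpow_tgen in hZ.
have hA' := (DL sub_mul) hA hX ((DL sub_inv) hA hCA).
have hB' := (DL sub_mul) hB hY ((DL sub_inv) hB hCB).
have h1 := (DL sub_one) hA; have h2 := (DL sub_one) hB; have h3 := (DL sub_one) Tgrp_sub.
have eq0 : dmul (dmul (dmul (ctr (L%:~R * (p%:R * u1)) (L%:~R * (1 + p%:R * k1)),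
                  ctr (L%:~R * (p%:R * u2)) (L%:~R * (p%:R * k2)))
                 (dinv (ctr (P1%:~R * p%:R^-1) (P1%:~R * 0), ctr (P1%:~R * 0) (P1%:~R * 0))))
                (dmul (ctr (M%:~R * (q%:R * u3)) (M%:~R * (q%:R * k3)), ctr (M%:~R * (q%:R * u4)) (M%:~R * (1 + q%:R * k4)))
                 (dinv (ctr (P2%:~R * 0) (P2%:~R * 0), ctr (P2%:~R * q%:R^-1) (P2%:~R * 0)))))
        (ctr 0 N%:~R, ctr 0 (- N%:~R)) = dmul (dmul done_ done_) done_.
  rewrite !dmul1g done_ctr !dctr_inv !dctr_mul -eP1 -eP2 -eL -eM -eN.
  congr pair; congr ctr; field; by rewrite ?nat_neq0.
have [e1 _ _] := uniq3 hA' hB' hZ h1 h2 h3 eq0.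
move: e1; rewrite dctr_inv dctr_mul done_ctr => /(congr1 (fun d => ef d.1)) /=.
rewrite mulr0 subr0 -eL => /eqP; rewrite mulf_eq0 oppr_eq0 => /orP [] h; move: h; apply/negP;
  apply: one_plus_ne0 => //; zt.
Qed.
Lemma case1 : (forall y, B y -> DZc y) -> (exists b0, B b0 /\ b0 <> done_) -> False.
Proof.
move=> hBc [b0 [hb0 hb0n]].
have compA : forall g, Dgrp p q g -> exists z, [/\ DZc z, Dgrp p q z & A (dmul g z)].
  move=> g hg; have [a [b [t [ha hb ht eg]]]] := decompD hg.
  exists (dmul (dinv g) a); split.
  - apply: (CF0 (r := dmul b t)); first by rewrite eg dmulA.
    have [hb1 hb2] := hBc _ hb; have [ht1 ht2] := Tgrp_DZc ht.
    by split; apply: Zc_mul.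
  - by apply: Dgrp_mul; [exact: Dgrp_inv | exact: AD].
  - by rewrite (DL mulKVg).
have [za [hza hzaD hAa]] := compA _ (@Dgrp_ga1 p q).
have [zt [hzt hztD hAt]] := compA _ (@Dgrp_gt1 p q).
have [zs [hzs hzsD hAs]] := compA _ (Dgrp_gs1 q hp0).
have [ya [hya hyaD hBa]] := compA _ (@Dgrp_ga2 p q).
have [yt [hyt hytD hBt]] := compA _ (@Dgrp_gt2 p q).
have [ys [hys hysD hBs]] := compA _ (Dgrp_gs2 p hq0).
have hAc : A (ctr (p%:R^-1) 0, kone).
  have := (DL sub_comm) hA hAs hAt.
  by rewrite dcomm_central // dcommE /= (comm_st hp0) kcomm_x1.
have hAc2 : A (kone, ctr (q%:R^-1) 0).
  have := (DL sub_comm) hA hBs hBt.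
  by rewrite dcomm_central // dcommE /= (comm_st hq0) kcomm_x1.
have hAb : A (gb, kone).
  have := (DL sub_comm) hA hAa hAt.
  by rewrite dcomm_central // dcommE /= comm_at kcomm_x1.
have hw1 : A (dmul (gpow dmul done_ (dmul (sroot p, kone) zs) p) (dinv (gb, kone))).
  by apply: (DL sub_mul) hA _ _; [exact: (DL sub_gpow) | exact: (DL sub_inv)].
rewrite (DZc_ctr hzs) W1 // in hw1.
have [hk1 hu1] := Dgrp_Zc1 hzsD hzs.1.
have [hk2 hu2] := Dgrp_Zc2 hzsD hzs.2.
have hb0D := BD hb0; have hb0Z := hBc _ hb0.
have [he1 hv1] := Dgrp_Zc1 hb0D hb0Z.1.
have [he2 hv2] := Dgrp_Zc2 hb0D hb0Z.2.
rewrite (DZc_ctr hb0Z) in hb0 hb0n.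
move: hw1 hk1 hu1 hk2 hu2 hb0 hb0n he1 hv1 he2 hv2.
move: (ec zs.1) (ef zs.1) (ec zs.2) (ef zs.2) (ec b0.1) (ef b0.1) (ec b0.2) (ef b0.2) => u1 k1 u2 k2 v1 e1 v2 e2.
move=> hw1 hk1 hu1 hk2 hu2 hb0 hb0n he1 hv1 he2 hv2.
have hD0 : - (1 + p%:R * (k1 + k2)) != 0.
  by rewrite oppr_eq0; apply: one_plus_ne0 => //; zt.
have [Dd eD] := isZ_int (x := - (1 + p%:R * (k1 + k2))) ltac:(zt).
have [Al eAl] := isZ_int (x := - e1 - e2) ltac:(zt).
have [Be eBe] := isZ_int (x := (1 + p%:R * k1) * e2 - (p%:R * k2) * e1) ltac:(zt).
have [P1 eP1] := isZ_int (x := Dd%:~R * (p%:R * v1) - Al%:~R * p%:R * (p%:R * u1)) ltac:(zt).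
have [P2 eP2] := isZ_int (x := Dd%:~R * (q%:R * v2) - Al%:~R * p%:R * (q%:R * u2)) ltac:(zt).
have hX := (DL sub_zpow) Dd hB hb0.
have hY := (DL sub_zpow) Al hA hw1.
have hZ := (DL sub_zpow) Be Tgrp_sub Tgrp_tgen.
have hC1 := (DL sub_zpow) P1 hA hAc.
have hC2 := (DL sub_zpow) P2 hA hAc2.
rewrite kone_ctr dzpow_ctr in hC1.
rewrite kone_ctr dzpow_ctr in hC2.
rewrite dzpow_ctr in hX.
rewrite dzpow_ctr in hY.
rewrite zpow_tgen in hZ.
have hA' := (DL sub_mul) hA ((DL sub_mul) hA hY hC1) hC2.
have h1 := (DL sub_one) hA; have h2 := (DL sub_one) hB; have h3 := (DL sub_one) Tgrp_sub.
have eq0 : dmul (dmul done_ (ctr (Dd%:~R * v1) (Dd%:~R * e1), ctr (Dd%:~R * v2) (Dd%:~R * e2))) done_ =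
   dmul (dmul (dmul (dmul (ctr (Al%:~R * (p%:R * u1)) (Al%:~R * (1 + p%:R * k1)),
                           ctr (Al%:~R * (p%:R * u2)) (Al%:~R * (p%:R * k2)))
                     (ctr (P1%:~R * p%:R^-1) (P1%:~R * 0), ctr (P1%:~R * 0) (P1%:~R * 0)))
               (ctr (P2%:~R * 0) (P2%:~R * 0), ctr (P2%:~R * q%:R^-1) (P2%:~R * 0))) done_)
        (ctr 0 Be%:~R, ctr 0 (- Be%:~R)).
  rewrite dmul1g !dmulg1 !dctr_mul -eP1 -eP2 -eD -eAl -eBe.
  congr pair; congr ctr; field; by rewrite ?nat_neq0.
have [_ eX _] := uniq3 h1 hX h3 hA' h2 hZ eq0.
have hDd : Dd%:~R != 0 :> rat by rewrite -eD.
have c1 := congr1 (fun d => ec d.1) eX; have c2 := congr1 (fun d => ef d.1) eX.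
have c3 := congr1 (fun d => ec d.2) eX; have c4 := congr1 (fun d => ef d.2) eX.
move: c1 c2 c3 c4 => /= /eqP; rewrite mulf_eq0 (negbTE hDd) /= => /eqP c1.
move=> /eqP; rewrite mulf_eq0 (negbTE hDd) /= => /eqP c2.
move=> /eqP; rewrite mulf_eq0 (negbTE hDd) /= => /eqP c3.
move=> /eqP; rewrite mulf_eq0 (negbTE hDd) /= => /eqP c4.
by apply: hb0n; rewrite c1 c2 c3 c4.
Qed.
Lemma keyD : (exists b0, B b0 /\ b0 <> done_) -> (exists z, A z /\ ~ Zc z.1) -> False.
Proof.
move=> hb [z [hz hnz]].
have [r [hr har]] := NC_D1 clA hz hnz.
have hB1 : forall y, B y -> Zc y.1.
  move=> y hy; case: (classic (Zc y.1)) => // hny; exfalso.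
  have [r' [hr' hbr]] := NC_D1 clB hy hny.
  exact: CC_D1 har hbr hr hr'.
case: (classic (exists z', A z' /\ ~ Zc z'.2)) => [[z' [hz' hnz']] | hA2].
  apply: case1 => // y hy; split; first exact: hB1.
  case: (classic (Zc y.2)) => // hny; exfalso.
  have [s1 [hs1 has]] := NC_D2 clA hz' hnz'.
  have [s2 [hs2 hbs]] := NC_D2 clB hy hny.
  exact: CC_D2 has hbs hs1 hs2.
apply: case2 => // y hy; apply: NNPP => h; apply: hA2; by exists y.
Qed.

End KeyD.

Lemma indecomp_S p q S : (1 < p)%N -> (1 < q)%N ->
  internal_direct dmul dinv done_ (Dgrp p q) S Tgrp -> indecomposable dmul dinv done_ S.
Proof.
move=> hp hq hS; split.
  move=> htriv.
  case: (hS) => _ [_ [_ [_ [_ [_ hD]]]]].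
  have [s [t [hs [ht e]]]] := hD _ (@Dgrp_ga1 p q).
  rewrite (htriv _ hs) dmul1g in e.
  have [k [_ ek]] := Tgrp_Tset ht.
  by move: e; rewrite ek => /(congr1 (fun d => ea d.1)) /= /eqP; rewrite oner_eq0.
move=> A B hAB.
case: (classic (trivial_set done_ A)) => hA; first by left.
case: (classic (trivial_set done_ B)) => hB; first by right.
exfalso.
have [a0 ha0] := nontriv_ex hA; have [b0 hb0] := nontriv_ex hB.
have [a [b [t [ha hb ht e]]]] := decompD hS hAB (@Dgrp_gt1 p q).
have ex1 : ex a.1 + ex b.1 + ex t.1 = 1 by rewrite -!ex_mul; move: e => /(congr1 (fun d => ex d.1)) /= <-.
have ht1 : ex t.1 = 0 by have [[-> _] _] := Tgrp_DZc ht.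
rewrite ht1 addr0 in ex1.
have [h0|h0] := eqVneq (ex a.1) 0.
  apply: (keyD hp hq hS ((DL id_sym) hAB)); first by exists a0.
  by exists b; split => // -[hy0 _]; move: ex1; rewrite h0 hy0 addr0 => /eqP; rewrite eq_sym oner_eq0.
apply: (keyD hp hq hS hAB); first by exists b0.
by exists a; split => // -[hx0 _]; rewrite hx0 eqxx in h0.
Qed.

Lemma bezout_pq (p q : nat) : coprime p q -> exists u v : int, u * p%:Z + v * q%:Z = 1.
Proof.
move=> hpq; have [u [v e]] := Bezoutz p q; exists u, v; rewrite e /gcdz /=.
by move/eqP: hpq => ->.
Qed.

Definition piD (u v : int) (p q : nat) (d : elt * elt) : rat :=
  u%:~R * p%:R * ef d.1 - v%:~R * q%:R * ef d.2.

Lemma exists_S p q : (1 < p)%N -> (1 < q)%N -> coprime p q ->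
  exists S, internal_direct dmul dinv done_ (Dgrp p q) S Tgrp.
Proof.
move=> hp hq hpq.
have hp0 : (0 < p)%N by apply: ltnW.
have hq0 : (0 < q)%N by apply: ltnW.
have [u [v euv]] := bezout_pq hpq.
have euvR : u%:~R * p%:R + v%:~R * q%:R = 1 :> rat.
  by have := congr1 (fun z : int => z%:~R : rat) euv; rewrite /= rmorphD !rmorphM /= !pmulrn rmorph1.
pose S := fun d => Dgrp p q d /\ piD u v p q d = 0.
exists S.
have hSs : is_subgroup dmul dinv done_ S.
  split; first by split; [apply: (DL sub_one); apply: Dgrp_sub | rewrite /piD /= !mulr0 subrr].
  split.
    move=> x y [hx ex0] [hy ey0]; split; first exact: (DL sub_mul) (Dgrp_sub p q) hx hy.
    move: ex0 ey0; rewrite /piD /= => ex0 ey0.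
    have -> : u%:~R * p%:R * (ef x.1 + ef y.1) - v%:~R * q%:R * (ef x.2 + ef y.2) =
      (u%:~R * p%:R * ef x.1 - v%:~R * q%:R * ef x.2) + (u%:~R * p%:R * ef y.1 - v%:~R * q%:R * ef y.2) :> rat by ring.
    by rewrite ex0 ey0 addr0.
  move=> x [hx ex0]; split; first exact: (DL sub_inv) (Dgrp_sub p q) hx.
  move: ex0; rewrite /piD /= => ex0.
  have -> : u%:~R * p%:R * - ef x.1 - v%:~R * q%:R * - ef x.2 =
      - (u%:~R * p%:R * ef x.1 - v%:~R * q%:R * ef x.2) :> rat by ring.
  by rewrite ex0 oppr0.
split => //.
split; first exact: Tgrp_sub.
split; first by move=> x [].
split; first by move=> x; apply: Tgrp_D.
split.
  move=> x [_ ex0] /Tgrp_Tset [k [hk ek]]; move: ex0; rewrite ek /piD /=.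
  have -> : u%:~R * p%:R * k - v%:~R * q%:R * - k = k * (u%:~R * p%:R + v%:~R * q%:R) :> rat by ring.
  by rewrite euvR mulr1 => ->; rewrite oppr0.
split.
  by move=> x y _ /Tgrp_DZc hy; rewrite (DZc_central hy).
move=> g hg.
have [_ _ h1 _ _] := Ggrp_inG hp0 hg.1.
have [_ _ h2 _ _] := Ggrp_inG hq0 hg.2.
have [K eK] := isZ_int (x := piD u v p q g)
  ltac:(rewrite /piD -!mulrA; apply: rpredB; apply: rpredM => //; apply: intr_int).
exists (dmul g (dinv (zpow dmul dinv done_ tgen K))), (zpow dmul dinv done_ tgen K).
split; last split; last by rewrite (DL mulgKV).
- split.
    apply: (DL sub_mul) (Dgrp_sub p q) hg _; apply: (DL sub_inv) (Dgrp_sub p q) _.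
    apply: Tgrp_D; exact: ((DL sub_zpow) K Tgrp_sub Tgrp_tgen).
  rewrite zpow_tgen /piD /=.
  have -> : u%:~R * p%:R * (ef g.1 - K%:~R) - v%:~R * q%:R * (ef g.2 - - K%:~R) =
    (u%:~R * p%:R * ef g.1 - v%:~R * q%:R * ef g.2) - K%:~R * (u%:~R * p%:R + v%:~R * q%:R) :> rat by ring.
  by rewrite euvR mulr1 -eK /piD subrr.
- exact: ((DL sub_zpow) K Tgrp_sub Tgrp_tgen).
Qed.

Lemma nonabelian n : ~ abelian_set kmul (Ggrp n).
Proof.
move=> h; have := congr1 eb (h _ _ (@Ggrp_ga n) (@Ggrp_gt n)).
rewrite /= /phib /= => /eqP; by rewrite !(mulr1, mulr0, addr0, add0r) oner_eq0.
Qed.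

Lemma indecomp_T : indecomposable dmul dinv done_ Tgrp.
Proof.
split.
  move=> h; have := congr1 (fun d => ef d.1) (h _ Tgrp_tgen) => /= /eqP; by rewrite oner_eq0.
move=> A B hAB.
case: (classic (trivial_set done_ A)) => hA; first by left.
case: (classic (trivial_set done_ B)) => hB; first by right.
exfalso.
have [a0 [ha0 ha0n]] := nontriv_ex hA; have [b0 [hb0 hb0n]] := nontriv_ex hB.
case: hAB => sA [sB [AT [BT [hI _]]]].
have [k [hk ek]] := Tgrp_Tset (AT _ ha0).
have [l [hl el]] := Tgrp_Tset (BT _ hb0).
have [K eK] := isZ_int hk; have [L eL] := isZ_int hl.
have hK : K%:~R != 0 :> rat by apply/eqP => h0; apply: ha0n; rewrite ek eK h0 oppr0.
have hL : L%:~R != 0 :> rat by apply/eqP => h0; apply: hb0n; rewrite el eL h0 oppr0.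
have h1 := (DL sub_zpow) L sA ha0.
have h2 := (DL sub_zpow) K sB hb0.
rewrite ek eK dzpow_ctr in h1; rewrite el eL dzpow_ctr in h2.
have e : (ctr (L%:~R * 0) (L%:~R * K%:~R), ctr (L%:~R * 0) (L%:~R * - K%:~R)) =
         (ctr (K%:~R * 0) (K%:~R * L%:~R), ctr (K%:~R * 0) (K%:~R * - L%:~R)) :> elt * elt.
  by congr pair; congr ctr; ring.
rewrite -e in h2.
have := hI _ h1 h2 => /(congr1 (fun d => ef d.1)) /= /eqP; rewrite mulf_eq0.
by rewrite (negbTE hK) (negbTE hL).
Qed.

Local Close Scope ring_scope.
Unset Implicit Arguments.

Theorem mainTheorem19 (p q : nat) (hp : (1 < p)%N) (hq : (1 < q)%N)
    (hpq : coprime p q) :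
  (forall n : nat, (0 < n)%N -> gpow dmul done_ tgen n <> done_) /\
  (exists S, internal_direct dmul dinv done_ (Dgrp p q) S Tgrp) /\
  (forall S, internal_direct dmul dinv done_ (Dgrp p q) S Tgrp ->
     indecomposable dmul dinv done_ S) /\
  ~ abelian_set kmul (Ggrp p) /\ ~ abelian_set kmul (Ggrp q) /\
  indecomposable kmul kinv kone (Ggrp p) /\ indecomposable kmul kinv kone (Ggrp q) /\
  indecomposable dmul dinv done_ Tgrp.
Proof.
split; first exact: gpow_tgen_ne.
split; first exact: exists_S.
split; first by move=> S; apply: indecomp_S.
split; first exact: nonabelian.
split; first exact: nonabelian.
split; first exact: indecomp_G.
split; first exact: indecomp_G.
exact: indecomp_T.
Qed.
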